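(* Let $\rho_r\in(0,1)$, and let $R>\lambda>\rho_r$ be constants. Let $C\subseteq\{0,1\}^n$ consist of $2^{Rn}$ independent uniformly random vectors, partitioned into $2^{R'n}$ blocks $A_s$ ($s\in\{0,1\}^{R'n}$) of $2^\ell$ vectors each, where $\ell=\lambda n$ and $R'n=Rn-\ell$, and let $C_\Pi$ be the stochastic code encoding message $s$ as a uniformly random element of $A_s$. Then there is $\delta>0$ such that, with probability $1-e^{-\Omega(n)}$ over the choice of $C$, \[\mathrm{Sem}(C_\Pi)=\max_{P_{\mathbf S},\mathscr S}I\bigl(\mathbf S;\mathbf V(\mathscr S)\bigr)\le e^{-n\delta},\] where the maximum is over all distributions $P_{\mathbf S}$ on messages and all $\mathscr S\subseteq[n]$ with $|\mathscr S|=\rho_r n$.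
   Context: For a message $\mathbf S\sim P_{\mathbf S}$ with random encoding $\mathbf X$, and $\mathscr S\subseteq[n]$, $\mathbf V(\mathscr S)\in\{0,1,?\}^n$ is the string equal to $\mathbf X$ on coordinates in $\mathscr S$ and $?$ elsewhere. *)

(* Defs.v *)
From HB Require Import structures.
From Stdlib Require Import Reals ClassicalDescription.
From mathcomp Require Import all_boot.

Set Implicit Arguments.
Unset Strict Implicit.
Unset Printing Implicit Defensive.

Open Scope R_scope.

Lemma Rplus_assoc' : associative Rplus.
Proof. by move=> x y z; rewrite Rplus_assoc. Qed.
HB.instance Definition _ :=
  Monoid.isComLaw.Build R 0 Rplus Rplus_assoc' Rplus_comm Rplus_0_l.

Definition rsum (T : finType) (f : T -> R) : R := \big[Rplus/0]_(x : T) f x.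

Definition log2 (x : R) : R := (ln x / ln 2).

Definition nfloor (x : R) : nat := Z.to_nat (Int_part x).

Definition bits (m : nat) := {ffun 'I_m -> bool}.
(* {0,1,?}^n : None stands for the erasure symbol ? *)
Definition obs (n : nat) := {ffun 'I_n -> option bool}.

Definition erase (n : nat) (S : {set 'I_n}) (x : bits n) : obs n :=
  [ffun i => if i \in S then Some (x i) else None].

(* A code C of 2^(k+l) vectors of {0,1}^n, partitioned into 2^k blocks
   A_s = { C (s,u) | u in {0,1}^l }, s in {0,1}^k, of 2^l vectors each. *)
Definition code (n k l : nat) := {ffun (bits k * bits l) -> bits n}.

Definition is_dist (T : finType) (P : T -> R) : Prop :=
  (forall x, 0 <= P x) /\ rsum P = 1.

(* Joint law of (S, V(S)) for the stochastic code C_Pi: the message s is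
   encoded as C(s,U) with U uniform on {0,1}^l (a uniform element of A_s). *)
Definition joint (n k l : nat) (C : code n k l) (P : bits k -> R)
  (S : {set 'I_n}) (s : bits k) (v : obs n) : R :=
  (P s * (INR #|[set u : bits l | erase S (C (s, u)) == v]| / pow 2 l)).

Definition marg_V (n k l : nat) (C : code n k l) (P : bits k -> R)
  (S : {set 'I_n}) (v : obs n) : R :=
  rsum (fun s => joint C P S s v).

(* mutual information I(S; V(S)) in bits, with 0 log 0 = 0 *)
Definition mutinfo (n k l : nat) (C : code n k l) (P : bits k -> R)
  (S : {set 'I_n}) : R :=
  rsum (fun sv : bits k * obs n =>
    let j := joint C P S sv.1 sv.2 in
    if Req_EM_T j 0 then 0
    else (j * log2 (j / (P sv.1 * marg_V C P S sv.2)))).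

(* Sem(C_Pi) <= b, where Sem(C_Pi) = max over P_S and over S with |S| = r
   of I(S; V(S)). *)
Definition Sem_le (n k l : nat) (C : code n k l) (r : nat) (b : R) : Prop :=
  forall (P : bits k -> R) (S : {set 'I_n}),
    is_dist P -> #|S| = r -> (mutinfo C P S <= b).

(* probability of an event over a uniformly random code
   (all 2^(k+l) codewords independent uniform in {0,1}^n) *)
Definition Prob_code (n k l : nat) (E : code n k l -> Prop) : R :=
  (rsum (fun C : code n k l => if excluded_middle_informative (E C) then 1 else 0)
   / INR #|{: code n k l}|).

(* Main.v *)
Require Import Defs.
From HB Require Import structures.
From Stdlib Require Import Reals.
From Stdlib Require Import Lra Lia ZArith Classical ClassicalDescription.
From mathcomp Require Import all_boot.
Open Scope R_scope.

Lemma nfloor_spec x : 0 <= x -> INR (nfloor x) <= x /\ x < INR (nfloor x) + 1.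
Proof.
move=> hx; rewrite /nfloor.
have [h1 h2] := base_Int_part x.
have hz : (0 <= Int_part x)%Z.
  have : -1 < IZR (Int_part x) by lra.
  move=> h; apply: Zlt_succ_le; apply: lt_IZR; rewrite /Z.succ plus_IZR /=; lra.
rewrite INR_IZR_INZ Z2Nat.id //; lra.
Qed.

Lemma Rmult_assoc' : associative Rmult.
Proof. by move=> x y z; rewrite Rmult_assoc. Qed.
HB.instance Definition _ :=
  Monoid.isComLaw.Build R 1 Rmult Rmult_assoc' Rmult_comm Rmult_1_l.
Lemma Rmult_0_l' : left_zero 0 Rmult. Proof. move=> x; exact: Rmult_0_l. Qed.
Lemma Rmult_0_r' : right_zero 0 Rmult. Proof. move=> x; exact: Rmult_0_r. Qed.
HB.instance Definition _ := Monoid.isMulLaw.Build R 0 Rmult Rmult_0_l' Rmult_0_r'.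
Lemma Rdl : left_distributive Rmult Rplus. Proof. move=> x y z; ring. Qed.
Lemma Rdr : right_distributive Rmult Rplus. Proof. move=> x y z; ring. Qed.
HB.instance Definition _ := Monoid.isAddLaw.Build R Rmult Rplus Rdl Rdr.

Lemma rsum_le (T : finType) (f g : T -> R) :
  (forall x, f x <= g x) -> rsum f <= rsum g.
Proof. move=> h; rewrite /rsum; apply: big_ind2 => //; [lra| move=> *; lra]. Qed.

Lemma rsum_ge0 (T : finType) (f : T -> R) : (forall x, 0 <= f x) -> 0 <= rsum f.
Proof. move=> h; rewrite /rsum; apply: big_ind => //; [lra| move=> *; lra]. Qed.

Lemma rsum_scal (T : finType) (f : T -> R) c : rsum (fun x => c * f x) = c * rsum f.
Proof. by rewrite /rsum big_distrr. Qed.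

Lemma rsum_add (T : finType) (f g : T -> R) : rsum (fun x => f x + g x) = rsum f + rsum g.
Proof. by rewrite /rsum big_split. Qed.

Lemma rsum_const (T : finType) c : rsum (fun _ : T => c) = INR #|T| * c.
Proof.
rewrite /rsum big_const; elim: #|T| => [|m IH]; first by rewrite /=; lra.
rewrite iterS IH S_INR; lra.
Qed.

Lemma rsum_single (T : finType) (f : T -> R) x :
  (forall y, 0 <= f y) -> f x <= rsum f.
Proof.
move=> h; rewrite /rsum (bigD1 x) //=.
have : 0 <= \big[Rplus/0]_(i | i != x) f i by apply: big_ind => //; [lra|move=>*; lra].
lra.
Qed.

Lemma INR_sum (T : finType) (f : T -> nat) : INR (\sum_(x : T) f x) = rsum (fun x => INR (f x)).
Proof. by rewrite /rsum (big_morph INR plus_INR (Logic.eq_refl _)). Qed.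

Lemma rsum_ext (T : finType) (f g : T -> R) : (forall x, f x = g x) -> rsum f = rsum g.
Proof. by move=> h; rewrite /rsum; apply: eq_bigr => x _. Qed.


Lemma prod_const (T : finType) (a : R) : \big[Rmult/1]_(x : T) a = a ^ #|T|.
Proof. rewrite big_const; elim: #|T| => [|m IH] //=; by rewrite IH. Qed.

Lemma distr_ffun (I J : finType) (g : I -> J -> R) :
  rsum (fun C : {ffun I -> J} => \big[Rmult/1]_i g i (C i)) =
  \big[Rmult/1]_i rsum (g i).
Proof. rewrite /rsum; symmetry; exact: bigA_distr_bigA. Qed.

Lemma INR_expn a b : INR (a ^ b)%N = INR a ^ b.
Proof. elim: b => [|b IH] //=; by rewrite expnS mult_INR IH. Qed.

Lemma card_ffunR (I J : finType) : INR #|{ffun I -> J}| = INR #|J| ^ #|I|.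
Proof. by rewrite card_ffun INR_expn. Qed.

Lemma prod_div (I : finType) (f : I -> R) b :
  b <> 0 -> \big[Rmult/1]_i f i / b ^ #|I| = \big[Rmult/1]_i (f i / b).
Proof.
move=> hb; rewrite -prod_const /Rdiv.
rewrite (big_morph Rinv (id1:=1) (op1:=Rmult) (fun x y => Rinv_mult x y)); last by rewrite Rinv_1.
by rewrite -big_split.
Qed.

Lemma expect_block (n k l : nat) (s : bits k) (h : bits l -> bits n -> R) :
  rsum (fun C : code n k l => \big[Rmult/1]_u h u (C (s, u))) / INR #|{: code n k l}|
  = \big[Rmult/1]_u (rsum (h u) / INR #|{: bits n}|).
Proof.
pose g := fun (i : bits k * bits l) (y : bits n) => if i.1 == s then h i.2 y else 1.
rewrite (@rsum_ext _ _ (fun C : code n k l => \big[Rmult/1]_i g i (C i))); last first.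
  move=> C; symmetry.
  rewrite (eq_bigr (fun p => (fun a b => g (a, b) (C (a, b))) p.1 p.2)); last by case.
  rewrite -(pair_bigA _ (fun a b => g (a, b) (C (a, b)))) /= (bigD1 s) //= [X in _ * X]big1 ?Rmult_1_r.
    by apply: eq_bigr => u _; rewrite /g /= eqxx.
  move=> s' /negbTE hs; apply: big1 => u _; by rewrite /g /= hs.
rewrite distr_ffun.
rewrite /code card_ffunR prod_div; last first.
  apply: not_0_INR; rewrite card_ffun; apply/eqP; rewrite expn_eq0 card_bool //.
rewrite (eq_bigr (fun p => (fun a b => rsum (g (a, b)) / INR #|{: bits n}|) p.1 p.2)); last by case.
rewrite -(pair_bigA _ (fun a b => rsum (g (a, b)) / INR #|{: bits n}|)) /= (bigD1 s) //= [X in _ * X]big1 ?Rmult_1_r.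
  by apply: eq_bigr => u _; rewrite /g /= eqxx.
move=> s' /negbTE hs; apply: big1 => u _; rewrite /g /= hs rsum_const.
rewrite Rmult_1_r /Rdiv Rinv_r //; apply: not_0_INR; rewrite card_ffun; apply/eqP; rewrite expn_eq0 card_bool //.
Qed.

From mathcomp Require Import zify.
Set Implicit Arguments.
Unset Strict Implicit.

Lemma card_agree n (S : {set 'I_n}) (x : bits n) :
  #|[set y : bits n | erase S y == erase S x]| = (2 ^ (n - #|S|))%N.
Proof.
pose F := fun i : 'I_n => if i \in S then pred1 (x i) else predT.
have E : [set y : bits n | erase S y == erase S x] =i (family F : pred (bits n)).
  move=> y; rewrite inE; apply/eqP/familyP => [h i | h].
    have := congr1 (fun f : obs n => f i) h; rewrite /erase !ffunE /F.
    by case: (i \in S) => // [[->]]; rewrite inE.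
  apply/ffunP => i; rewrite /erase !ffunE; have := h i; rewrite /F.
  by case: (i \in S) => //; rewrite inE => /eqP ->.
rewrite (eq_card E) card_family foldrE big_map big_enum /=.
rewrite (eq_bigr (fun i => if i \in S then 1%N else 2%N)); last first.
  by move=> i _; rewrite /F; case: (i \in S); rewrite ?card1 ?card_bool.
rewrite (bigID (fun i => i \in S)) /= big1 ?mul1n; last by move=> i ->.
rewrite (eq_bigr (fun _ => 2%N)); last by move=> i /negbTE ->.
rewrite prod_nat_const; congr (_ ^ _)%N.
have h := cardC (mem S); rewrite card_ord in h.
have -> : #|(fun i : 'I_n => i \notin S)| = #|[predC S]| by apply: eq_card => i; rewrite !inE.
move: h; set a := #|[predC S]|; set b := #|S|; lia.
Qed.

Definition Ncount n k l (C : code n k l) (s : bits k) (S : {set 'I_n}) (w : obs n) :=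
  #|[set u : bits l | erase S (C (s, u)) == w]|.

Lemma exp_card (T : finType) (P : pred T) t :
  exp (t * INR #|[set u | P u]|) = \big[Rmult/1]_u (if P u then exp t else 1).
Proof.
rewrite cardsE -sum1_card big_mkcond /=.
rewrite (big_morph (fun m => exp (t * INR m)) (id1 := 1) (op1 := Rmult) (op2 := addn)); last first.
- by rewrite /= Rmult_0_r exp_0.
- by move=> a b; rewrite plus_INR Rmult_plus_distr_l exp_plus.
apply: eq_bigr => u _; rewrite /in_mem /=; case: (P u) => /=; last by rewrite Rmult_0_r exp_0.
by rewrite Rmult_1_r.
Qed.

Lemma sum_if (T : finType) (P : pred T) c :
  rsum (fun y => if P y then c else 0) = INR #|[set y | P y]| * c.
Proof.
rewrite /rsum -big_mkcond /= cardsE big_const.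
elim: #|_| => [|m IH]; first by rewrite /=; lra.
rewrite iterS IH S_INR; lra.
Qed.

Lemma mgf n k l (s : bits k) (S : {set 'I_n}) (w : obs n) t :
  rsum (fun C : code n k l => exp (t * INR (Ncount C s S w))) / INR #|{: code n k l}|
  = (1 + INR #|[set y : bits n | erase S y == w]| / INR #|{: bits n}| * (exp t - 1)) ^ #|{: bits l}|.
Proof.
rewrite (@rsum_ext _ _ (fun C : code n k l => \big[Rmult/1]_u
   (fun u y => if erase S y == w then exp t else 1) u (C (s, u)))); last first.
  by move=> C; rewrite /Ncount exp_card.
rewrite (@expect_block n k l s (fun u y => if erase S y == w then exp t else 1)) prod_const; congr (_ ^ _).
rewrite (@rsum_ext _ _ (fun y => 1 + (if erase S y == w then exp t - 1 else 0))); last first.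
  by move=> y; case: (_ == _); lra.
rewrite rsum_add rsum_const sum_if.
have h : INR #|{: bits n}| <> 0.
  apply: not_0_INR; rewrite card_ffun; apply/eqP; rewrite expn_eq0 card_bool //.
move: h; set c := INR #|{: bits n}| => h.
rewrite /Rdiv Rmult_plus_distr_r Rmult_1_r Rinv_r //. clearbody c. rewrite Rmult_assoc (Rmult_comm (exp t - 1)) -Rmult_assoc. reflexivity.
Qed.

Lemma exp_up t : 0 <= t <= 1/2 -> exp t <= 1 + t + 2 * t ^ 2.
Proof.
move=> ht.
have h1 := exp_ineq1_le (- t).
have h2 : exp t * exp (- t) = 1 by rewrite -exp_plus Rplus_opp_r exp_0.
have h3 : 0 < exp t := exp_pos t.
nra.
Qed.

Lemma exp_down t : 0 <= t -> exp (- t) <= 1 - t + t ^ 2.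
Proof.
move=> ht.
have h1 := exp_ineq1_le (t / 2).
have h2 : exp t = exp (t / 2) * exp (t / 2) by rewrite -exp_plus; f_equal; field.
have h3 : exp t * exp (- t) = 1 by rewrite -exp_plus Rplus_opp_r exp_0.
have h4 : 0 < exp (- t) := exp_pos _.
have h5 : (1 + t / 2) * (1 + t / 2) <= exp t by rewrite h2; apply: Rmult_le_compat; lra.
nra.
Qed.

Lemma pow_exp z L : 0 <= 1 + z -> (1 + z) ^ L <= exp (INR L * z).
Proof.
move=> hz; elim: L => [|L IH]; first by rewrite /= Rmult_0_l exp_0; lra.
rewrite S_INR Rmult_plus_distr_r Rmult_1_l exp_plus /=.
rewrite Rmult_comm; apply: Rmult_le_compat => //; first exact: pow_le.
exact: exp_ineq1_le.
Qed.

Lemma tail n k l (s : bits k) (S : {set 'I_n}) (w : obs n) t a :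
  let q := INR #|[set y : bits n | erase S y == w]| / INR #|{: bits n}| in
  rsum (fun C : code n k l => exp (t * (INR (Ncount C s S w) - a))) / INR #|{: code n k l}|
  <= exp (- (t * a) + INR #|{: bits l}| * q * (exp t - 1)).
Proof.
move=> q.
have hc : 0 < INR #|{: bits n}|.
  apply: lt_0_INR; apply/ltP; rewrite card_ffun expn_gt0 card_bool //.
have hq : 0 <= q <= 1.
  rewrite /q; split; first by apply: Rmult_le_pos; [exact: pos_INR| apply: Rlt_le; apply: Rinv_0_lt_compat; exact hc].
  apply: (Rmult_le_reg_r (INR #|{: bits n}|)) => //.
  rewrite /Rdiv Rmult_assoc Rinv_l ?Rmult_1_r ?Rmult_1_l; last lra.
  apply: le_INR; apply/leP; exact: max_card.
rewrite (@rsum_ext _ _ (fun C => exp (- (t * a)) * exp (t * INR (Ncount C s S w)))); last first.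
  by move=> C; rewrite -exp_plus; f_equal; ring.
rewrite rsum_scal /Rdiv Rmult_assoc -/(Rdiv _ _) mgf exp_plus.
apply: Rmult_le_compat_l; first by apply: Rlt_le; apply: exp_pos.
rewrite Rmult_assoc; apply: pow_exp.
have := exp_pos t; rewrite -/q; nra.
Qed.


Definition Good n k l (C : code n k l) (r : nat) (eps : R) : Prop :=
  forall (s : bits k) (S : {set 'I_n}) (x : bits n), #|S| = r ->
   let mu := INR #|{: bits l}| *
      (INR #|[set y : bits n | erase S y == erase S x]| / INR #|{: bits n}|) in
   (1 - eps) * mu <= INR (Ncount C s S (erase S x)) <= (1 + eps) * mu.

Lemma card_bitsR m : INR #|{: bits m}| = 2 ^ m.
Proof. by rewrite card_ffun INR_expn card_bool card_ord. Qed.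

Lemma sum_fibers (U V : finType) (f : U -> V) :
  (\sum_(v : V) #|[set u | f u == v]|)%N = #|U|.
Proof.
rewrite -sum1_card.
rewrite (eq_bigr (fun v => \sum_(u : U) (if f u == v then 1 else 0))%N); last first.
  by move=> v _; rewrite cardsE -sum1_card big_mkcond.
rewrite exchange_big; apply: eq_bigr => u _.
rewrite -big_mkcond /= (big_pred1 (f u)) // => v; by rewrite /= eq_sym.
Qed.

Lemma joint_sum n k l (C : code n k l) P S :
  is_dist P -> rsum (fun sv : bits k * obs n => joint C P S sv.1 sv.2) = 1.
Proof.
move=> [hP0 hP1].
rewrite /rsum -(pair_bigA _ (fun s v => joint C P S s v)) /=.
rewrite -hP1 /rsum; apply: eq_bigr => s _.
rewrite /joint -big_distrr /= -big_distrl /=.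
have -> : \big[Rplus/0]_(v : obs n) INR #|[set u : bits l | erase S (C (s, u)) == v]|
          = 2 ^ l.
  rewrite -card_bitsR -(sum_fibers (fun u : bits l => erase S (C (s, u)))).
  by rewrite -/(rsum _) -INR_sum.
rewrite /Rdiv Rinv_r ?Rmult_1_r //; apply: pow_nonzero; lra.
Qed.

Lemma ln_le_sub1 x : 0 < x -> ln x <= x - 1.
Proof. move=> hx; have := exp_ineq1_le (ln x); rewrite exp_ln //; lra. Qed.

Lemma mi_bound n k l (C : code n k l) r eps :
  0 < eps <= 1/2 -> Good C r eps -> Sem_le C r (8 * eps).
Proof.
move=> he hG P S hP hS.
have [hP0 hP1] := hP.
have hL : 0 < 2 ^ l by apply: pow_lt; lra.
rewrite /mutinfo.
apply: Rle_trans (_ : rsum (fun sv : bits k * obs n => (8 * eps) * joint C P S sv.1 sv.2) <= _);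
  last by rewrite rsum_scal joint_sum //; lra.
apply: rsum_le => -[s v] /=.
have hj0 : 0 <= joint C P S s v.
  rewrite /joint; apply: Rmult_le_pos => //; apply: Rmult_le_pos; first exact: pos_INR.
  by apply: Rlt_le; apply: Rinv_0_lt_compat.
case: Req_EM_T => hj /=; first by rewrite hj; lra.
have hjp : 0 < joint C P S s v by lra.
set cnt := #|[set u : bits l | erase S (C (s, u)) == v]|.
have hcnt : (0 < cnt)%N.
  rewrite lt0n; apply/eqP => h; apply: hj; rewrite /joint -/cnt h /=; lra.
case/card_gt0P: hcnt => u; rewrite inE => /eqP hv.
set x := C (s, u).
have hv' : v = erase S x by rewrite -hv.
set M := INR #|[set y : bits n | erase S y == erase S x]|.
have hcN : 0 < INR #|{: bits n}| by rewrite card_bitsR; apply: pow_lt; lra.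
have hM : 1 <= M.
  rewrite /M; apply: (le_INR 1); apply/leP; apply/card_gt0P; exists x; by rewrite inE.
set Q := M / INR #|{: bits n}|.
have hQ : 0 < Q by apply: Rdiv_lt_0_compat; lra.
have hbd : forall s', (1 - eps) * Q <= INR #|[set u : bits l | erase S (C (s', u)) == v]| / 2 ^ l
                      <= (1 + eps) * Q.
  move=> s'.
  have [h1 h2] : (1 - eps) * (2 ^ l * Q) <= INR #|[set u : bits l | erase S (C (s', u)) == v]|
                 <= (1 + eps) * (2 ^ l * Q).
    by have := hG s' S x hS; rewrite card_bitsR /Ncount hv'.
  split.
  - apply: (Rmult_le_reg_r (2 ^ l)) => //; rewrite /Rdiv [X in _ <= X]Rmult_assoc Rinv_l; lra.
  - apply: (Rmult_le_reg_r (2 ^ l)) => //; rewrite /Rdiv [X in X <= _]Rmult_assoc Rinv_l; lra.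
set p := INR cnt / 2 ^ l.
have [hp1 hp2] := hbd s.
rewrite -/cnt -/p in hp1 hp2.
have hjE : joint C P S s v = P s * p by [].
have hPs : 0 < P s.
  have := hP0 s; move: hjp; rewrite hjE => hjp h.
  case: h => // h; rewrite -h in hjp; lra.
set m := marg_V C P S v.
have hm : (1 - eps) * Q <= m.
  rewrite /m /marg_V.
  apply: Rle_trans (_ : rsum (fun s' => ((1 - eps) * Q) * P s') <= _).
    by rewrite rsum_scal hP1; lra.
  apply: rsum_le => s'; rewrite /joint Rmult_comm.
  apply: Rmult_le_compat_l => //; exact: (proj1 (hbd s')).
have hmp : 0 < m by nra.
have -> : joint C P S s v / (P s * m) = p / m.
  rewrite hjE; field; lra.
have hpm : p / m - 1 <= 4 * eps.
  have : p - m <= 4 * eps * m by nra.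
  move=> h; apply: (Rmult_le_reg_r m) => //.
  rewrite Rmult_minus_distr_r /Rdiv Rmult_assoc Rinv_l; lra.
have hppos : 0 < p / m by apply: Rdiv_lt_0_compat; nra.
have hl := ln_le_sub1 hppos.
have hl2 := ln_lt_2.
rewrite /log2 (Rmult_comm (8 * eps)); apply: Rmult_le_compat_l; first lra.
apply: (Rmult_le_reg_r (ln 2)); first lra.
rewrite /Rdiv Rmult_assoc Rinv_l; nra.
Qed.


Lemma rsum_exchange (T U : finType) (F : T -> U -> R) :
  rsum (fun x => rsum (fun y => F x y)) = rsum (fun y => rsum (fun x => F x y)).
Proof. by rewrite /rsum exchange_big. Qed.

Lemma q_exact n (S : {set 'I_n}) (x : bits n) :
  INR #|[set y : bits n | erase S y == erase S x]| / INR #|{: bits n}| = / 2 ^ #|S|.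
Proof.
have hr : (#|S| <= n)%N by have := subset_leq_card (subsetT S); rewrite cardsT card_ord.
rewrite card_agree card_bitsR INR_expn.
have -> : (2 ^ n = 2 ^ (n - #|S|) * 2 ^ #|S|)%R by rewrite -pow_add; f_equal; lia.
have h1 : 2 ^ (n - #|S|) <> 0 by apply: pow_nonzero; lra.
have h2 : 2 ^ #|S| <> 0 by apply: pow_nonzero; lra.
change (INR 2) with 2; by field.
Qed.

Lemma exp_mono x y : x <= y -> exp x <= exp y.
Proof. case=> h; [apply: Rlt_le; exact: exp_increasing | rewrite h; lra]. Qed.

Lemma term_bound n k l (s : bits k) (S : {set 'I_n}) (x : bits n) eps :
  0 < eps <= 1/2 ->
  let mu := INR #|{: bits l}| *
      (INR #|[set y : bits n | erase S y == erase S x]| / INR #|{: bits n}|) in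
  let th := eps / 4 in
  rsum (fun C : code n k l =>
     exp (th * (INR (Ncount C s S (erase S x)) - (1 + eps) * mu)) +
     exp ((- th) * (INR (Ncount C s S (erase S x)) - (1 - eps) * mu))) / INR #|{: code n k l}|
  <= 2 * exp (- (mu * eps ^ 2 / 8)).
Proof.
move=> he mu th.
rewrite rsum_add /Rdiv Rmult_plus_distr_r -!/(Rdiv _ _).
have t1 := tail l s S (erase S x) th ((1 + eps) * mu).
have t2 := tail l s S (erase S x) (- th) ((1 - eps) * mu).
rewrite /= -/mu in t1 t2.
have hmu : 0 <= mu.
  rewrite /mu; apply: Rmult_le_pos; first exact: pos_INR.
  rewrite q_exact; apply: Rlt_le; apply: Rinv_0_lt_compat; apply: pow_lt; lra.
have e1 := exp_up (t := th) ltac:(rewrite /th; lra).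
have e2 := exp_down (t := th) ltac:(rewrite /th; lra).
rewrite -/mu in t1 t2.
have hth : th = eps / 4 by [].
clearbody mu th.
have b1 : - (th * ((1 + eps) * mu)) + mu * (exp th - 1) <= - (mu * eps ^ 2 / 8).
  have : mu * (exp th - 1) <= mu * (th + 2 * th ^ 2) by apply: Rmult_le_compat_l => //; lra.
  have E : - (th * ((1 + eps) * mu)) + mu * (th + 2 * th ^ 2) = - (mu * eps ^ 2 / 8) by rewrite hth; field.
  lra.
have b2 : - (- th * ((1 - eps) * mu)) + mu * (exp (- th) - 1) <= - (mu * eps ^ 2 / 8).
  have : mu * (exp (- th) - 1) <= mu * (- th + th ^ 2) by apply: Rmult_le_compat_l => //; lra.
  have E : - (- th * ((1 - eps) * mu)) + mu * (- th + th ^ 2) = - (mu * eps ^ 2 / 8) - (mu * eps ^ 2 / 16) by rewrite hth; field.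
  have : 0 <= mu * eps ^ 2 by apply: Rmult_le_pos => //; apply: pow2_ge_0.
  lra.
apply: Rle_trans (Rplus_le_compat _ _ _ _ t1 t2) _.
have := exp_mono b1; have := exp_mono b2; lra.
Qed.

Lemma rsum_div (T : finType) (f : T -> R) c : rsum f / c = rsum (fun x => f x / c).
Proof. rewrite /Rdiv Rmult_comm -rsum_scal; apply: rsum_ext => x; ring. Qed.

Lemma prob_good n k l r eps (E : code n k l -> Prop) :
  0 < eps <= 1/2 -> (forall C, Good C r eps -> E C) ->
  1 - INR #|{: bits k}| * (INR #|{: {set 'I_n}}| * (INR #|{: bits n}| *
        (2 * exp (- (2 ^ l / 2 ^ r * eps ^ 2 / 8))))) <= Prob_code E.
Proof.
move=> he hE.
set th := eps / 4.
pose mu (S : {set 'I_n}) (x : bits n) := INR #|{: bits l}| *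
      (INR #|[set y : bits n | erase S y == erase S x]| / INR #|{: bits n}|).
pose F (s : bits k) S x (C : code n k l) :=
     exp (th * (INR (Ncount C s S (erase S x)) - (1 + eps) * mu S x)) +
     exp ((- th) * (INR (Ncount C s S (erase S x)) - (1 - eps) * mu S x)).
pose G (s : bits k) (S : {set 'I_n}) (x : bits n) (C : code n k l) := if #|S| == r then F s S x C else 0.
pose Phi (C : code n k l) := rsum (fun s => rsum (fun S => rsum (fun x => G s S x C))).
have hF : forall s S x C, 0 <= F s S x C.
  move=> s S x C; rewrite /F; have := exp_pos (th * (INR (Ncount C s S (erase S x)) - (1 + eps) * mu S x)).
  have := exp_pos ((- th) * (INR (Ncount C s S (erase S x)) - (1 - eps) * mu S x)); lra.
have hG : forall s S x C, 0 <= G s S x C.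
  by move=> *; rewrite /G; case: (_ == _) => //; lra.
have hPhi0 : forall C, 0 <= Phi C.
  move=> C; apply: rsum_ge0 => s; apply: rsum_ge0 => S; apply: rsum_ge0 => x; exact: hG.
have hPhi1 : forall C, ~ Good C r eps -> 1 <= Phi C.
  move=> C hC.
  have [s [S [x hx]]] : exists (s : bits k) (S : {set 'I_n}) (x : bits n), #|S| = r /\
     ~ ((1 - eps) * mu S x <= INR (Ncount C s S (erase S x)) <= (1 + eps) * mu S x).
    apply: NNPP => hn; apply: hC => s S x hS.
    apply: NNPP => hb; apply: hn; exists s, S, x; split => //.
  case: hx => hS hb.
  have h1 := @rsum_single _ (fun x' => G s S x' C) x (fun y => hG s S y C).
  have h2 := @rsum_single _ (fun S' => rsum (fun x' => G s S' x' C)) S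
     (fun S' => @rsum_ge0 _ _ (fun y => hG s S' y C)).
  have h3 := @rsum_single _ (fun s' => rsum (fun S' => rsum (fun x' => G s' S' x' C))) s
     (fun s' => @rsum_ge0 _ _ (fun S' => @rsum_ge0 _ _ (fun y => hG s' S' y C))).
  apply: (Rle_trans _ (G s S x C)); last exact: (Rle_trans _ _ _ h1 (Rle_trans _ _ _ h2 h3)).
  rewrite /G hS eqxx /F.
  have hth : 0 < th by rewrite /th; lra.
  have e1 := exp_ineq1_le (th * (INR (Ncount C s S (erase S x)) - (1 + eps) * mu S x)).
  have e2 := exp_ineq1_le ((- th) * (INR (Ncount C s S (erase S x)) - (1 - eps) * mu S x)).
  have p1 := exp_pos (th * (INR (Ncount C s S (erase S x)) - (1 + eps) * mu S x)).
  have p2 := exp_pos ((- th) * (INR (Ncount C s S (erase S x)) - (1 - eps) * mu S x)).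
  have [h|h] : (1 + eps) * mu S x < INR (Ncount C s S (erase S x)) \/
               INR (Ncount C s S (erase S x)) < (1 - eps) * mu S x.
    case: (Rlt_le_dec ((1 + eps) * mu S x) (INR (Ncount C s S (erase S x)))) => g1; first by left.
    case: (Rlt_le_dec (INR (Ncount C s S (erase S x))) ((1 - eps) * mu S x)) => g2; first by right.
    by exfalso; apply: hb; split.
  - have : 0 <= th * (INR (Ncount C s S (erase S x)) - (1 + eps) * mu S x).
      apply: Rmult_le_pos; lra.
    lra.
  - have : 0 <= - th * (INR (Ncount C s S (erase S x)) - (1 - eps) * mu S x).
      nra.
    lra.
have hind : forall C, 1 - Phi C <= (if excluded_middle_informative (E C) then 1 else 0).
  move=> C; case: excluded_middle_informative => hEC /=; first by have := hPhi0 C; lra.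
  have : ~ Good C r eps by move=> hg; apply: hEC; apply: hE.
  move/hPhi1; lra.
have hcode : 0 < INR #|{: code n k l}|.
  apply: lt_0_INR; apply/ltP; rewrite card_ffun expn_gt0 card_ffun expn_gt0 card_bool //.
set B := 2 * exp (- (2 ^ l / 2 ^ r * eps ^ 2 / 8)).
have hB : 0 <= B by rewrite /B; have := exp_pos (- (2 ^ l / 2 ^ r * eps ^ 2 / 8)); lra.
have hterm : forall s S x, rsum (fun C => G s S x C) / INR #|{: code n k l}| <= B.
  move=> s S x; rewrite /G; case: eqP => hS; last first.
    rewrite rsum_const Rmult_0_r /Rdiv Rmult_0_l; lra.
  have := @term_bound n k l s S x eps he.
  move=> /= h; apply: (Rle_trans _ _ _ h).
  rewrite q_exact card_bitsR hS /B; right; reflexivity.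
have hsum : rsum Phi / INR #|{: code n k l}| <= INR #|{: bits k}| * (INR #|{: {set 'I_n}}| * (INR #|{: bits n}| * B)).
  rewrite /Phi rsum_exchange.
  rewrite (@rsum_ext _ _ (fun s => rsum (fun S => rsum (fun x => rsum (fun C => G s S x C))))); last first.
    move=> s; rewrite rsum_exchange; apply: rsum_ext => S; by rewrite rsum_exchange.
  rewrite rsum_div -rsum_const; apply: rsum_le => s.
  rewrite rsum_div -rsum_const; apply: rsum_le => S.
  rewrite rsum_div -rsum_const; apply: rsum_le => x.
  exact: hterm.
rewrite /Prob_code.
apply: Rle_trans (_ : rsum (fun C => 1 - Phi C) / INR #|{: code n k l}| <= _); last first.
  apply: Rmult_le_compat_r; last exact: rsum_le hind.
  by apply: Rlt_le; apply: Rinv_0_lt_compat.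
rewrite (@rsum_ext _ _ (fun C => 1 + (-1) * Phi C)); last by move=> C; ring.
rewrite rsum_add rsum_const rsum_scal /Rdiv Rmult_plus_distr_r Rmult_1_r Rinv_r; last by apply: Rgt_not_eq; exact: hcode.
have E1 : forall y c : R, 1 + -1 * y * / c = 1 - y / c by move=> *; rewrite /Rdiv; ring.
rewrite E1; apply: Rplus_le_compat_l; apply: Ropp_le_contravar; exact: hsum.
Qed.


Lemma card_setsR n : INR #|{: {set 'I_n}}| = 2 ^ n.
Proof.
have -> : #|{: {set 'I_n}}| = #|powerset [set: 'I_n]|.
  rewrite -cardsT; apply: eq_card => A; by rewrite !inE subsetT.
by rewrite card_powerset cardsT card_ord INR_expn.
Qed.

Lemma pow2_exp m : 2 ^ m = exp (INR m * ln 2).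
Proof. rewrite -ln_pow; last lra. by rewrite exp_ln //; apply: pow_lt; lra. Qed.

Lemma exp_sq x : 0 <= x -> x ^ 2 / 4 <= exp x.
Proof.
move=> hx.
have h1 := exp_ineq1_le (x / 2).
have h2 : exp x = exp (x / 2) * exp (x / 2) by rewrite -exp_plus; f_equal; field.
rewrite h2; nra.
Qed.

Theorem mainTheorem7 (rho_r lam Rate : R) :
  (0 < rho_r < 1) -> (rho_r < lam) -> (lam < Rate) ->
  exists delta : R, (0 < delta) /\
  exists c : R, (0 < c) /\
  exists N : nat, forall n : nat, (N <= n)%N ->
    let l := nfloor (lam * INR n) in
    let k := (nfloor (Rate * INR n) - l)%N in
    (1 - exp (- (c * INR n)) <=
     Prob_code (fun C : code n k l =>
        Sem_le C (nfloor (rho_r * INR n)) (exp (- (INR n * delta))))).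
Proof.
move=> [hr0 hr1] hrl hlR.
have hln2 := ln_lt_2.
have hln2' : ln 2 < 1.
  have h := exp_ineq1 1 ltac:(lra).
  rewrite -(ln_exp 1); apply: ln_increasing; lra.
have [d0 hd0def] : exists d0, d0 = (lam - rho_r) * ln 2 / 4 by eexists.
have hd0 : 0 < d0 by rewrite hd0def; nra.
exists (d0 / 2); split; first lra.
exists 1; split; first lra.
set M0 := 14 / d0 + 16 * (Rate + 5) / (d0 ^ 2) + 1.
have hM1 : 0 <= 14 / d0 by apply: Rlt_le; apply: Rdiv_lt_0_compat; lra.
have hM2 : 0 <= 16 * (Rate + 5) / (d0 ^ 2).
  apply: Rlt_le; apply: Rdiv_lt_0_compat; [lra | apply: pow_lt; lra].
exists (nfloor M0).+1 => n hn l k.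
have hnM : M0 < INR n.
  have [_ h] := nfloor_spec (M0) ltac:(rewrite /M0; lra).
  have : INR (nfloor M0).+1 <= INR n by apply: le_INR; apply/leP.
  rewrite S_INR; lra.
have hn1 : 1 <= INR n by rewrite /M0 in hnM; lra.
have hnd14 : 14 <= INR n * d0.
  have : 14 / d0 <= INR n by rewrite /M0 in hnM; lra.
  move=> h; have := Rmult_le_compat_r d0 _ _ (Rlt_le _ _ hd0) h.
  rewrite /Rdiv Rmult_assoc Rinv_l; lra.
have hnd2 : 16 * (Rate + 5) <= INR n * d0 ^ 2.
  have : 16 * (Rate + 5) / d0 ^ 2 <= INR n by rewrite /M0 in hnM; lra.
  move=> h; have hp : 0 < d0 ^ 2 by apply: pow_lt.
  have := Rmult_le_compat_r (d0 ^ 2) _ _ (Rlt_le _ _ hp) h.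
  rewrite /Rdiv Rmult_assoc Rinv_l; lra.
have [hl1 hl2] := nfloor_spec (lam * INR n) ltac:(nra).
have [hr1' hr2'] := nfloor_spec (rho_r * INR n) ltac:(nra).
have [hK1 hK2] := nfloor_spec (Rate * INR n) ltac:(nra).
have hk : INR k <= Rate * INR n.
  apply: Rle_trans hK1; apply: le_INR; apply/leP; exact: leq_subr.
rewrite -/l in hl1 hl2.
set r := nfloor (rho_r * INR n).
rewrite -/r in hr1' hr2'.
have [eps heps] : exists eps, eps = exp (- (INR n * d0)) by eexists.
have hexp1 := exp_ineq1_le (INR n * d0).
have hinv : eps * exp (INR n * d0) = 1 by rewrite heps -exp_plus Rplus_opp_l exp_0.
have hepos : 0 < eps by rewrite heps; exact: exp_pos.
have he : 0 < eps <= 1/2 by split => //; nra.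
have h8 : 8 * eps <= exp (- (INR n * (d0 / 2))).
  have e2 := exp_ineq1_le (INR n * (d0 / 2)).
  have : exp (- (INR n * (d0 / 2))) = eps * exp (INR n * (d0 / 2)).
    rewrite heps -exp_plus; f_equal; field.
  move=> ->; nra.
apply: Rle_trans (prob_good (r := r) (E := fun C : code n k l =>
        Sem_le C r (exp (- (INR n * (d0 / 2))))) he _); last first.
  move=> C hC P S hP hS; apply: Rle_trans (mi_bound he hC hP hS) h8.
rewrite card_bitsR card_setsR card_bitsR.
set Y := 2 ^ l / 2 ^ r * eps ^ 2 / 8.
have hY : (Rate + 5) * INR n <= Y.
  have h1 : 2 ^ l / 2 ^ r * eps ^ 2 = exp ((INR l - INR r) * ln 2 - 2 * (INR n * d0)).
    rewrite !pow2_exp /Rdiv -exp_Ropp heps /= Rmult_1_r -!exp_plus; f_equal; ring.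
  have h2 : exp (2 * (INR n * d0) - ln 2) <= 2 ^ l / 2 ^ r * eps ^ 2.
    rewrite h1; apply: exp_mono.
    have : (lam * INR n - 1 - rho_r * INR n) * ln 2 <= (INR l - INR r) * ln 2.
      apply: Rmult_le_compat_r; lra.
    rewrite hd0def; nra.
  have h3 : exp (2 * (INR n * d0) - ln 2) = exp (2 * (INR n * d0)) / 2.
    by rewrite exp_plus exp_Ropp exp_ln //; lra.
  have h4 := exp_sq (x := 2 * (INR n * d0)) ltac:(nra).
  rewrite /Y; nra.
have hL : 2 ^ k * (2 ^ n * (2 ^ n * (2 * exp (- Y)))) = exp ((INR k + 2 * INR n + 1) * ln 2 - Y).
  rewrite (_ : (INR k + 2 * INR n + 1) * ln 2 - Y =
     INR k * ln 2 + (INR n * ln 2 + (INR n * ln 2 + (ln 2 + - Y)))); last ring.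
  rewrite !exp_plus exp_ln; last lra.
  by rewrite !pow2_exp.
rewrite hL.
have : (INR k + 2 * INR n + 1) * ln 2 - Y <= - (1 * INR n).
  have : (INR k + 2 * INR n + 1) * ln 2 <= INR k + 2 * INR n + 1.
    have : 0 <= INR k + 2 * INR n + 1 by have := pos_INR k; lra.
    nra.
  nra.
move/exp_mono; lra.
Qed.
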